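(* Let $m,n \geq 2$ be integers with $(m,n) \neq (2,2)$. Then $2$ is the unique typical subrank of real tensors in $\mathbb{R}^2 \otimes \mathbb{R}^m \otimes \mathbb{R}^n$.
   Context: For $r \geq 0$ let $I_r := \sum_{j=1}^r e_j \otimes e_j \otimes e_j$. The subrank of $T \in \mathbb{R}^{n_1} \otimes \mathbb{R}^{n_2} \otimes \mathbb{R}^{n_3}$ is $Q(T) := \max\{ r \mid \exists\ \mathbb{R}\text{-linear } \varphi_i : \mathbb{R}^{n_i} \to \mathbb{R}^r,\ (\varphi_1 \otimes \varphi_2 \otimes \varphi_3) T = I_r\}$. An integer $r$ is a typical subrank of the format $n_1\times n_2\times n_3$ if $\{T \mid Q(T) = r\}$ contains a nonempty Euclidean-open subset of $\mathbb{R}^{n_1} \otimes \mathbb{R}^{n_2} \otimes \mathbb{R}^{n_3}$. *)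

(* Defs.v *)
From HB Require Import structures.
From mathcomp Require Import all_boot all_order all_algebra.
From mathcomp Require Import all_classical all_reals all_analysis.
Set Implicit Arguments. Unset Strict Implicit. Unset Printing Implicit Defensive.
Import Order.TTheory GRing.Theory Num.Theory.
Import numFieldNormedType.Exports.
Local Open Scope classical_set_scope.
Local Open Scope ring_scope.

(* A tensor in R^n1 (x) R^n2 (x) R^n3, stored (flattened) as an n1 x (n2*n3)
   matrix; the coordinate (i,j,k) is entry (i, mxvec_index j k).  The type
   'M[R]_(n1, n2*n3) carries MathComp-Analysis' product (= Euclidean)
   topology. *)
Notation tensor R n1 n2 n3 := (matrix R n1 (n2 * n3)%N).

Definition tentry (R : realType) n1 n2 n3 (T : tensor R n1 n2 n3)
  (i : 'I_n1) (j : 'I_n2) (k : 'I_n3) : R := T i (mxvec_index j k).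

(* (phi1 (x) phi2 (x) phi3) T = I_r, with the R-linear maps phi_i : R^{n_i} -> R^r
   given by their r x n_i matrices A, B, C. *)
Definition restricts_to_unit (R : realType) n1 n2 n3 (T : tensor R n1 n2 n3)
  (r : nat) : Prop :=
  exists (A : 'M[R]_(r, n1)) (B : 'M[R]_(r, n2)) (C : 'M[R]_(r, n3)),
    forall (a b c : 'I_r),
      \sum_(i < n1) \sum_(j < n2) \sum_(k < n3)
         A a i * B b j * C c k * tentry T i j k
      = ((a == b) && (b == c))%:R.

Definition is_subrank (R : realType) n1 n2 n3 (T : tensor R n1 n2 n3)
  (r : nat) : Prop :=
  restricts_to_unit T r /\ (forall s, restricts_to_unit T s -> (s <= r)%N).

Definition typical_subrank (R : realType) (n1 n2 n3 r : nat) : Prop :=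
  exists U : set (tensor R n1 n2 n3),
    open U /\ U !=set0 /\ U `<=` [set T | is_subrank T r].

(* Main.v *)
Require Import Defs.
From HB Require Import structures.
From mathcomp Require Import all_boot all_order all_algebra.
From mathcomp Require Import all_classical all_reals all_analysis.
From mathcomp Require Import ring lra.
Set Implicit Arguments. Unset Strict Implicit. Unset Printing Implicit Defensive.
Import Order.TTheory GRing.Theory Num.Theory.
Import numFieldNormedType.Exports.
Local Open Scope classical_set_scope.
Local Open Scope ring_scope.

Notation k0 := (@ord0 1).
Notation k1 := (@lift 2 (@ord0 1) (@ord0 0)).

Lemma ord2P (b : 'I_2) : b = k0 \/ b = k1.
Proof. case: b => [[|[|//]]] hb; [left|right]; exact/val_inj. Qed.

Lemma k10 : (k1 == k0) = false. Proof. by []. Qed.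
Lemma k01 : (k0 == k1) = false. Proof. by []. Qed.

Definition Sc (R : realType) m n r (T : tensor R 2 m n) (B : 'M[R]_(r, m))
  (C : 'M[R]_(r, n)) (i : 'I_2) (b c : 'I_r) : R :=
  \sum_(j < m) \sum_(k < n) B b j * C c k * tentry T i j k.

Lemma sum_Sc (R : realType) m n (T : tensor R 2 m n) r (A : 'M[R]_(r, 2)) (B : 'M[R]_(r, m)) (C : 'M[R]_(r, n)) a b c :
  \sum_(i < 2) \sum_(j < m) \sum_(k < n) A a i * B b j * C c k * tentry T i j k
  = \sum_(i < 2) A a i * Sc T B C i b c.
Proof.
apply: eq_bigr => i _; rewrite /Sc big_distrr; apply: eq_bigr => j _.
rewrite big_distrr; apply: eq_bigr => k _; by rewrite /= !mulrA.
Qed.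

Lemma L1 (R : realType) m n (T : tensor R 2 m n) (B : 'M[R]_(2, m)) (C : 'M[R]_(2, n)) :
  (forall i, Sc T B C i k0 k1 = 0) -> (forall i, Sc T B C i k1 k0 = 0) ->
  Sc T B C k0 k0 k0 * Sc T B C k1 k1 k1 - Sc T B C k0 k1 k1 * Sc T B C k1 k0 k0 != 0 ->
  restricts_to_unit T 2.
Proof.
set p := Sc T B C k0 k0 k0; set s := Sc T B C k1 k1 k1.
set q := Sc T B C k0 k1 k1; set r := Sc T B C k1 k0 k0.
move=> h01 h10 hD.
pose A : 'M[R]_(2,2) := \matrix_(a, i)
  ((p * s - q * r)^-1 * (if a == k0 then (if i == k0 then s else - q)
                         else (if i == k0 then - r else p))).
exists A, B, C => a b c; rewrite sum_Sc !big_ord_recl big_ord0 !mxE /=.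
have [->|->] := ord2P a; have [->|->] := ord2P b; have [->|->] := ord2P c;
  rewrite ?h01 ?h10 ?eqxx ?k10 ?k01 /= -/p -/q -/r -/s; try field; try done.
Qed.

Lemma Qle2 (R : realType) m n (T : tensor R 2 m n) r :
  restricts_to_unit T r -> (r <= 2)%N.
Proof.
move=> [A [B [C h]]].
pose W : 'M[R]_(2, r) := \matrix_(i, b) Sc T B C i b b.
have e : A *m W = 1%:M.
  apply/matrixP => a b; rewrite !mxE.
  have := h a b b; rewrite sum_Sc eqxx andbT => <-.
  by apply: eq_bigr => i _; rewrite mxE.
have := mxrankM_maxl A W; rewrite e mxrank1 => /leq_trans; apply.
exact: rank_leq_col.
Qed.

Lemma sum_delta (R : realType) n (F : 'I_n -> R) (k : 'I_n) :
  \sum_(j < n) (j == k)%:R * F j = F k.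
Proof.
rewrite (bigD1 k) //= eqxx mul1r big1 ?addr0 // => j /negbTE ->; by rewrite mul0r.
Qed.

Lemma Sdelta (R : realType) m n r p q (T : tensor R 2 m n) (f : 'I_p -> 'I_m)
  (g : 'I_q -> 'I_n) (be : 'I_r -> 'I_p -> R) (ga : 'I_r -> 'I_q -> R) i b c :
  Sc T (\matrix_(b, j) \sum_(l < p) be b l * (j == f l)%:R)
       (\matrix_(c, k) \sum_(l < q) ga c l * (k == g l)%:R) i b c
  = \sum_(l < p) \sum_(l' < q) be b l * ga c l' * tentry T i (f l) (g l').
Proof.
rewrite /Sc.
have e1 : forall j, \sum_(k < n) (\matrix_(b0, j0) \sum_(l < p) be b0 l * (j0 == f l)%:R) b j *
     (\matrix_(c0, k0) \sum_(l < q) ga c0 l * (k0 == g l)%:R) c k * tentry T i j k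
   = \sum_(l < p) be b l * (j == f l)%:R * \sum_(l' < q) ga c l' * tentry T i j (g l').
  move=> j. under eq_bigr => k _ do rewrite !mxE -mulrA.
  rewrite -big_distrr -big_distrl /=; congr (_ * _).
  under eq_bigr => k _ do rewrite big_distrl /=.
  rewrite exchange_big /=; apply: eq_bigr => l' _.
  rewrite -(sum_delta (fun k => ga c l' * tentry T i j k)).
  apply: eq_bigr => k _; rewrite /=; ring.
under eq_bigr => j _ do rewrite e1.
rewrite exchange_big /=; apply: eq_bigr => l _.
rewrite (_ : \sum_(l' < q) be b l * ga c l' * tentry T i (f l) (g l') =
   \sum_(j < m) (j == f l)%:R * (be b l * \sum_(l' < q) ga c l' * tentry T i j (g l'))).
  by apply: eq_bigr => j _; rewrite /=; ring.
rewrite sum_delta big_distrr /=; apply: eq_bigr => l' _; by rewrite mulrA.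
Qed.

Notation l0 := (@ord0 2).
Notation l1 := (@lift 3 (@ord0 2) (@ord0 1)).
Notation l2 := (@lift 3 (@ord0 2) (@lift 2 (@ord0 1) (@ord0 0))).

Definition det3 (K : comNzRingType) (u v w : 'I_3 -> K) : K :=
  u l0 * (v l1 * w l2 - v l2 * w l1) - u l1 * (v l0 * w l2 - v l2 * w l0)
  + u l2 * (v l0 * w l1 - v l1 * w l0).

Definition cross (K : comNzRingType) (v w : 'I_3 -> K) (l : 'I_3) : K :=
  match nat_of_ord l with
  | 0 => v l1 * w l2 - v l2 * w l1
  | 1 => v l2 * w l0 - v l0 * w l2
  | _ => v l0 * w l1 - v l1 * w l0
  end.

Definition Phi (K : comNzRingType) (x : 'I_2 -> 'I_2 -> 'I_3 -> K) : K :=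
  det3 (x k0 k0) (x k0 k1) (x k1 k1) * det3 (x k1 k1) (x k0 k0) (x k1 k0)
  - det3 (x k1 k0) (x k0 k1) (x k1 k1) * det3 (x k0 k1) (x k0 k0) (x k1 k0).

Lemma dot_cross (R : realType) (u v w : 'I_3 -> R) :
  \sum_(l < 3) cross v w l * u l = det3 u v w.
Proof. rewrite !big_ord_recl big_ord0 /cross /det3 /=; ring. Qed.

Lemma det3_12 (R : realType) (u w : 'I_3 -> R) : det3 u u w = 0.
Proof. rewrite /det3; ring. Qed.
Lemma det3_13 (R : realType) (u w : 'I_3 -> R) : det3 u w u = 0.
Proof. rewrite /det3; ring. Qed.

Definition gam (R : realType) (x : 'I_2 -> 'I_2 -> 'I_3 -> R) (c : 'I_2) : 'I_3 -> R :=
  if c == k0 then cross (x k0 k1) (x k1 k1) else cross (x k0 k0) (x k1 k0).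

Lemma core1 (R : realType) m n (T : tensor R 2 m n) (B : 'M[R]_(2, m)) (C : 'M[R]_(2, n))
  (x : 'I_2 -> 'I_2 -> 'I_3 -> R) :
  (forall i b c, Sc T B C i b c = \sum_(l < 3) gam x c l * x i b l) ->
  Phi x != 0 -> restricts_to_unit T 2.
Proof.
move=> hS hP; apply: (@L1 R m n T B C); [move=> i|move=> i|]; rewrite !hS /gam ?eqxx ?k10 !dot_cross.
- have [->|->] := ord2P i; [exact: det3_12 | exact: det3_13].
- have [->|->] := ord2P i; [exact: det3_12 | exact: det3_13].
- move: hP; rewrite /Phi; apply: contra_neq => <-; ring.
Qed.

Lemma core2 (R : realType) m n (T : tensor R 2 m n) (B : 'M[R]_(2, m)) (C : 'M[R]_(2, n))
  (x : 'I_2 -> 'I_2 -> 'I_3 -> R) :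
  (forall i b c, Sc T B C i b c = \sum_(l < 3) gam x b l * x i c l) ->
  Phi x != 0 -> restricts_to_unit T 2.
Proof.
move=> hS hP; apply: (@L1 R m n T B C); [move=> i|move=> i|]; rewrite !hS /gam ?eqxx ?k10 !dot_cross.
- have [->|->] := ord2P i; [exact: det3_12 | exact: det3_13].
- have [->|->] := ord2P i; [exact: det3_12 | exact: det3_13].
- move: hP; rewrite /Phi; apply: contra_neq => <-; ring.
Qed.

Definition ex1 (R : realType) m n (hm : (2 <= m)%N) (hn : (3 <= n)%N)
  (T : tensor R 2 m n) : 'I_2 -> 'I_2 -> 'I_3 -> R :=
  fun i b l => tentry T i (widen_ord hm b) (widen_ord hn l).

Definition ex2 (R : realType) m n (hm : (3 <= m)%N) (hn : (2 <= n)%N)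
  (T : tensor R 2 m n) : 'I_2 -> 'I_2 -> 'I_3 -> R :=
  fun i b l => tentry T i (widen_ord hm l) (widen_ord hn b).

Lemma good1 (R : realType) m n (hm : (2 <= m)%N) (hn : (3 <= n)%N) (T : tensor R 2 m n) :
  Phi (ex1 hm hn T) != 0 -> restricts_to_unit T 2.
Proof.
apply: (@core1 R m n T
  (\matrix_(b, j) \sum_(l < 2) (b == l)%:R * (j == widen_ord hm l)%:R)
  (\matrix_(c, k) \sum_(l < 3) gam (ex1 hm hn T) c l * (k == widen_ord hn l)%:R)).
move=> i b c; rewrite Sdelta.
under eq_bigr => l _ do under eq_bigr => l' _ do rewrite -mulrA.
under eq_bigr => l _ do rewrite -big_distrr /=.
rewrite (bigD1 b) //= eqxx mul1r [X in _ + X = _]big1 ?addr0 // => l /negbTE; rewrite eq_sym => ->; by rewrite mul0r.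
Qed.

Lemma good2 (R : realType) m n (hm : (3 <= m)%N) (hn : (2 <= n)%N) (T : tensor R 2 m n) :
  Phi (ex2 hm hn T) != 0 -> restricts_to_unit T 2.
Proof.
apply: (@core2 R m n T
  (\matrix_(b, j) \sum_(l < 3) gam (ex2 hm hn T) b l * (j == widen_ord hm l)%:R)
  (\matrix_(c, k) \sum_(l < 2) (c == l)%:R * (k == widen_ord hn l)%:R)).
move=> i b c; rewrite Sdelta; apply: eq_bigr => l _.
rewrite (bigD1 c) //= eqxx mulr1 big1 ?addr0 // => l' /negbTE; rewrite eq_sym => ->.
by rewrite mulr0 mul0r.
Qed.

Lemma restr_scale (R : realType) m n (T : tensor R 2 m n) r (s : R) :
  s != 0 -> restricts_to_unit (s *: T) r -> restricts_to_unit T r.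
Proof.
move=> s0 [A [B [C h]]]; exists (s *: A), B, C => a b c; rewrite -(h a b c).
apply: eq_bigr => i _; apply: eq_bigr => j _; apply: eq_bigr => k _.
rewrite /tentry !mxE; ring.
Qed.

Lemma sub2 (R : realType) m n (T : tensor R 2 m n) :
  restricts_to_unit T 2 -> is_subrank T 2.
Proof. by move=> h; split => // s; apply: Qle2. Qed.

Lemma exists_nonroot (R : realType) (p : {poly R}) (S : R) :
  p != 0 -> exists s, S < s /\ p.[s] != 0.
Proof.
move=> p0; case: (pselect (exists s, S < s /\ p.[s] != 0)) => // hn.
have hr : forall s, S < s -> p.[s] = 0.
  move=> s hs; apply/eqP; case: (boolP (p.[s] == 0)) => // hs'.
  by exfalso; apply: hn; exists s.
pose rs := [seq S + (k.+1)%:R | k <- iota 0 (size p)].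
have Hall : all (root p) rs.
  apply/allP => y /mapP [k _ ->]; apply/rootP; apply: hr.
  by rewrite ltrDl ltr0Sn.
have Hu : uniq rs.
  rewrite map_inj_uniq ?iota_uniq // => k k' /addrI /eqP; rewrite eqr_nat eqSS.
  by move/eqP.
have := max_poly_roots p0 Hall Hu.
by rewrite /rs size_map size_iota ltnn.
Qed.

Lemma Phi_ext (K : comNzRingType) (x y : 'I_2 -> 'I_2 -> 'I_3 -> K) :
  (forall i b l, x i b l = y i b l) -> Phi x = Phi y.
Proof. by move=> h; rewrite /Phi /det3 !h. Qed.

Lemma Phi_horner (R : realType) (x y : 'I_2 -> 'I_2 -> 'I_3 -> R) (s : R) :
  (Phi (fun i b l => 'X * (x i b l)%:P + (y i b l)%:P)).[s]
  = Phi (fun i b l => s * x i b l + y i b l).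
Proof. by rewrite /Phi /det3 !hornerE. Qed.

Section Cont.
Variables (R : realType) (m n : nat).
Local Notation TT := (tensor R 2 m n).

Lemma cB (f g : TT -> R) T : {for T, continuous f} -> {for T, continuous g} ->
  {for T, continuous (fun y => f y - g y)}.
Proof. exact: continuousB. Qed.
Lemma cD (f g : TT -> R) T : {for T, continuous f} -> {for T, continuous g} ->
  {for T, continuous (fun y => f y + g y)}.
Proof. exact: continuousD. Qed.
Lemma cM (f g : TT -> R) T : {for T, continuous f} -> {for T, continuous g} ->
  {for T, continuous (fun y => f y * g y)}.
Proof. exact: continuousM. Qed.

Lemma Phi_cont (ex : TT -> 'I_2 -> 'I_2 -> 'I_3 -> R)
  (hcont : forall i b l, continuous (fun T => ex T i b l)) T :
  {for T, continuous (fun T => Phi (ex T))}.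
Proof.
rewrite /Phi /det3.
repeat first [ apply: cB | apply: cD | apply: cM | apply: hcont ].
Qed.
End Cont.

Lemma main_gen (R : realType) m n (ex : tensor R 2 m n -> 'I_2 -> 'I_2 -> 'I_3 -> R)
  (hlin : forall (s : R) T D i b l, ex (s *: T + D) i b l = s * ex T i b l + ex D i b l)
  (hcont : forall i b l, continuous (fun T => ex T i b l))
  (hgood : forall T, Phi (ex T) != 0 -> restricts_to_unit T 2)
  (D0 : tensor R 2 m n) (hD0 : Phi (ex D0) != 0) :
  typical_subrank R 2 m n 2 /\
  (forall r : nat, typical_subrank R 2 m n r -> r = 2%N).
Proof.
have hopen : open [set T : tensor R 2 m n | Phi (ex T) != 0].
  have -> : [set T : tensor R 2 m n | Phi (ex T) != 0]
     = (fun T => Phi (ex T)) @^-1` [set x : R | x != 0] by [].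
  apply: open_comp; last exact: open_neq.
  move=> T _; exact: Phi_cont.
split.
  exists [set T | Phi (ex T) != 0]; split => //; split; first by exists D0.
  move=> T /= hT; exact/sub2/hgood.
move=> r [U [oU [[T0 UT0] hU]]].
pose g := fun t : R => T0 + t *: D0.
have gc : {for 0, continuous g}.
  have h1 : {for (0:R), continuous (fun _ : R => T0)} by exact: cst_continuous.
  have h2 : {for (0:R), continuous (fun t : R => t *: D0)}.
    apply: continuousZr_tmp; exact: cvg_id.
  have := continuousD h1 h2. by [].
have : nbhs (0 : R) (g @^-1` U).
  apply: gc; rewrite /g scale0r addr0; exact: oU.
move=> /nbhs_ballP [d d0 hd].
have q0 : Phi (fun i b l => 'X * (ex T0 i b l)%:P + (ex D0 i b l)%:P) != 0.
  apply: contra_neq hD0 => h; have := congr1 (fun p => p.[0]) h.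
  rewrite /= Phi_horner horner0 => <-; apply: Phi_ext => i b l.
  by rewrite mul0r add0r.
have [s [hs qs]] := exists_nonroot (d^-1) q0.
have s0 : 0 < s by apply: lt_trans hs; rewrite invr_gt0.
pose T := T0 + s^-1 *: D0.
have UT : U T.
  apply: (hd s^-1); rewrite -ball_normE /= sub0r normrN gtr0_norm ?invr_gt0 //.
  by rewrite invf_plt ?posrE.
have hT : restricts_to_unit T 2.
  apply: (@restr_scale _ _ _ T 2 s); first by rewrite gt_eqF.
  apply: hgood.
  rewrite (@Phi_ext _ _ (fun i b l => s * ex T0 i b l + ex D0 i b l)); last first.
    move=> i b l; rewrite -hlin /T scalerDr scalerA mulfV ?gt_eqF // scale1r //.
  by rewrite -Phi_horner.
have [h1 h2] := hU T UT.
apply/eqP; rewrite eqn_leq (h2 _ hT) andbT; exact: Qle2 h1.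
Qed.

Definition mkT (R : realType) m n (h : nat -> nat -> nat -> R) : tensor R 2 m n :=
  \matrix_(i, jk) (mxvec (\matrix_(j < m, k < n) h i j k)) 0 jk.

Lemma mkTE (R : realType) m n (h : nat -> nat -> nat -> R) i j k :
  tentry (mkT m n h) i j k = h i j k.
Proof. by rewrite /tentry /mkT mxE mxvecE mxE. Qed.

Definition hval (R : realType) (i j k : nat) : R :=
  match i, j with
  | 0, 0 => (k == 0)%:R
  | 1, 0 => (k == 1)%:R
  | 0, _ => (k == 2)%:R
  | _, _ => 1
  end.

Lemma Phi_hval (R : realType) : Phi (fun i b l => hval R i b l) != 0.
Proof.
rewrite (_ : Phi _ = -2); first by rewrite oppr_eq0 pnatr_eq0.
rewrite /Phi /det3 /hval /=; ring.
Qed.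

Theorem theorem4p4 (R : realType) (m n : nat) :
  (2 <= m)%N -> (2 <= n)%N -> ~ (m = 2%N /\ n = 2%N) ->
  typical_subrank R 2 m n 2 /\
  (forall r : nat, typical_subrank R 2 m n r -> r = 2%N).
Proof.
move=> hm hn hmn.
case: (ltnP 2 n) => hn3.
  apply: (@main_gen R m n (ex1 hm hn3) _ _ _ (mkT m n (fun i j k => hval R i j k))).
  - by move=> s T D i b l; rewrite /ex1 /tentry !mxE.
  - move=> i b l; exact: coord_continuous.
  - exact: good1.
  - rewrite (@Phi_ext _ _ (fun i b l => hval R i b l)); first exact: Phi_hval.
    by move=> i b l; rewrite /ex1 mkTE.
have en : n = 2%N by apply/eqP; rewrite eqn_leq hn3 hn.
have hm3 : (2 < m)%N.
  rewrite ltn_neqAle eq_sym hm andbT; apply/eqP => em; exact: hmn.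
apply: (@main_gen R m n (ex2 hm3 hn) _ _ _ (mkT m n (fun i j k => hval R i k j))).
- by move=> s T D i b l; rewrite /ex2 /tentry !mxE.
- move=> i b l; exact: coord_continuous.
- exact: good2.
- rewrite (@Phi_ext _ _ (fun i b l => hval R i b l)); first exact: Phi_hval.
  by move=> i b l; rewrite /ex2 mkTE.
Qed.
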